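(* Let $\widetilde{\Sigma}_1,\widetilde{\Sigma}_2$ be disjoint visibly pushdown alphabets, $\widetilde{\Sigma}=\widetilde{\Sigma}_1\uplus\widetilde{\Sigma}_2$, and $P_1\subseteq\widetilde{\Sigma}_1^*$, $P_2\subseteq\widetilde{\Sigma}_2^*$ well-matched visibly pushdown languages. If $\prec$ is a contextual order on $\widetilde{\Sigma}$ that is both visibly pushdown and coherent, then $\mathrm{red}_\prec(P_1\parallel P_2)$ is a visibly pushdown language and every word in it is well-nested.
   Context: A visibly pushdown (VP) alphabet is a finite alphabet partitioned into calls, returns and internals; write $\Sigma^{\mathsf{call}}_i,\Sigma^{\mathsf{ret}}_i$ for the calls and returns of $\widetilde{\Sigma}_i$; $\widetilde{\Sigma}$ has as calls/returns/internals the unions. Calls and returns in a word are matched like opening and closing parentheses (internals ignored); unmatched ones are pending; a word is well-matched if none are pending. A visibly pushdown automaton (VPA) is a pushdown automaton with bottom symbol $\bot$ that pushes one non-$\bot$ symbol on each call, pops the top on each return (reading $\bot$ on empty stack without removing it), and leaves the stack unchanged on internals; visibly pushdown languages are those accepted by VPAs. Shuffle: $P_1\parallel P_2=\{w\in\widetilde{\Sigma}^*:\Pi_{\widetilde{\Sigma}_i}(w)\in P_i\}$, $\Pi_{\widetilde{\Sigma}_i}$ erasing letters outside $\widetilde{\Sigma}_i$. A word is well-nested if every matched call–return pair consists of letters from the same $\widetilde{\Sigma}_k$. $\mathbb{I}=\{(a,b):a\in\widetilde{\Sigma}_i,b\in\widetilde{\Sigma}_j,i\ne j\}$, $\equiv_{\mathbb{I}}$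 the least reflexive transitive relation with $uabv\equiv_{\mathbb{I}}ubav$ for $(a,b)\in\mathbb{I}$. A contextual order is a map $\prec$ from $\widetilde{\Sigma}^*$ to strict total orders on $\widetilde{\Sigma}$; it induces $\preceq$: $\sigma\preceq\rho$ iff $\sigma$ is a prefix of $\rho$ or $\sigma=\alpha a\beta$, $\rho=\alpha b\gamma$ with $a\prec_\alpha b$. $\mathrm{red}_\prec(L)=\{w\in L:\forall u\in L,(u\equiv_{\mathbb{I}}w\wedge u\preceq w)\Rightarrow u=w\}$. $\prec$ is visibly pushdown if there is a complete deterministic VPA $A$ over $\widetilde{\Sigma}$ and a map $\mathsf{ord}$ from its states to strict total orders on $\widetilde{\Sigma}$ with $\prec_w=\mathsf{ord}(q)$, $q$ the state reached by $A$ after reading $w$. $\prec$ is coherent if for every $u\in\widetilde{\Sigma}^*$ and $i\in\{1,2\}$: if $u$ has pending calls and the last one is in $\Sigma^{\mathsf{call}}_i$, then $a\prec_u r$ for all $a\in\widetilde{\Sigma}_i$, $r\in\bigcup_{j\ne i}\Sigma^{\mathsf{ret}}_j$. *)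

(* Defs.v *)
From mathcomp Require Import all_boot.
Set Implicit Arguments. Unset Strict Implicit. Unset Printing Implicit Defensive.

Inductive vkind := VCall | VRet | VInt.

Definition is_call (k : vkind) : bool := if k is VCall then true else false.
Definition is_ret (k : vkind) : bool := if k is VRet then true else false.

Section VPA.
Variables (Sigma : finType) (kind : Sigma -> vkind).

(* A (nondeterministic) visibly pushdown automaton. The stack is a list of
   non-bottom symbols of Gam; the empty list represents the bottom symbol. *)
Record VPA := {
  vQ : finType;
  vGam : finType;
  vinit : {set vQ};
  vfinal : {set vQ};
  vcall : vQ -> Sigma -> vQ -> vGam -> bool;      (* q -a/push g-> q' *)
  vret : vQ -> Sigma -> option vGam -> vQ -> bool; (* None = reading bottom *)
  vint : vQ -> Sigma -> vQ -> bool
}.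

Inductive vreach (A : VPA) : vQ A -> seq (vGam A) -> seq Sigma -> vQ A -> seq (vGam A) -> Prop :=
| vr_nil q s : vreach q s [::] q s
| vr_call q s a w q1 g q2 s2 :
    kind a = VCall -> vcall q a q1 g -> vreach q1 (g :: s) w q2 s2 ->
    vreach q s (a :: w) q2 s2
| vr_ret q g s a w q1 q2 s2 :
    kind a = VRet -> vret q a (Some g) q1 -> vreach q1 s w q2 s2 ->
    vreach q (g :: s) (a :: w) q2 s2
| vr_ret_bot q a w q1 q2 s2 :
    kind a = VRet -> vret q a None q1 -> vreach q1 [::] w q2 s2 ->
    vreach q [::] (a :: w) q2 s2
| vr_int q s a w q1 q2 s2 :
    kind a = VInt -> vint q a q1 -> vreach q1 s w q2 s2 ->
    vreach q s (a :: w) q2 s2.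

Definition vaccepts (A : VPA) (w : seq Sigma) : Prop :=
  exists q0 q s, q0 \in vinit A /\ vreach q0 [::] w q s /\ q \in vfinal A.

Definition VPL (L : seq Sigma -> Prop) : Prop :=
  exists A : VPA, forall w, L w <-> vaccepts A w.

Record DVPA := {
  dQ : finType;
  dGam : finType;
  dinit : dQ;
  dcall : dQ -> Sigma -> dQ * dGam;
  dret : dQ -> Sigma -> option dGam -> dQ;
  dint : dQ -> Sigma -> dQ
}.

Fixpoint drun (A : DVPA) (q : dQ A) (s : seq (dGam A)) (w : seq Sigma) : dQ A :=
  match w with
  | [::] => q
  | a :: w' =>
    match kind a with
    | VCall => let: (q', g) := dcall q a in drun q' (g :: s) w'
    | VRet => match s with
              | g :: s' => drun (dret q a (Some g)) s' w'
              | [::] => drun (dret q a None) [::] w'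
              end
    | VInt => drun (dint q a) s w'
    end
  end.

Definition dstate (A : DVPA) (w : seq Sigma) : dQ A := drun (dinit A) [::] w.

Fixpoint pend_aux (st : seq Sigma) (w : seq Sigma) : seq Sigma :=
  match w with
  | [::] => st
  | a :: w' =>
    match kind a with
    | VCall => pend_aux (a :: st) w'
    | VRet => pend_aux (behead st) w'
    | VInt => pend_aux st w'
    end
  end.

Definition pending_calls (w : seq Sigma) : seq Sigma := pend_aux [::] w.

Fixpoint pret_aux (st : seq Sigma) (w : seq Sigma) : nat :=
  match w with
  | [::] => 0
  | a :: w' =>
    match kind a with
    | VCall => pret_aux (a :: st) w'
    | VRet => if st is _ :: st' then pret_aux st' w' else (pret_aux [::] w').+1
    | VInt => pret_aux st w'
    end
  end.

Definition well_matched (w : seq Sigma) : bool :=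
  (pending_calls w == [::]) && (pret_aux [::] w == 0).

Fixpoint wn_aux (side : Sigma -> bool) (st : seq Sigma) (w : seq Sigma) : bool :=
  match w with
  | [::] => true
  | a :: w' =>
    match kind a with
    | VCall => wn_aux side (a :: st) w'
    | VRet => if st is c :: st' then (side c == side a) && wn_aux side st' w'
              else wn_aux side [::] w'
    | VInt => wn_aux side st w'
    end
  end.

Definition well_nested (side : Sigma -> bool) (w : seq Sigma) : bool :=
  wn_aux side [::] w.

End VPA.

Section Shuffle.
Variables (S1 S2 : finType) (k1 : S1 -> vkind) (k2 : S2 -> vkind).

Definition sumk (a : S1 + S2) : vkind :=
  match a with inl x => k1 x | inr y => k2 y end.

Definition side (a : S1 + S2) : bool := if a is inl _ then true else false.

Definition getl (a : S1 + S2) : option S1 := if a is inl x then Some x else None.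
Definition getr (a : S1 + S2) : option S2 := if a is inr y then Some y else None.

Definition proj1w (w : seq (S1 + S2)) : seq S1 := pmap getl w.
Definition proj2w (w : seq (S1 + S2)) : seq S2 := pmap getr w.

Definition shuffle (P1 : seq S1 -> Prop) (P2 : seq S2 -> Prop) (w : seq (S1 + S2)) : Prop :=
  P1 (proj1w w) /\ P2 (proj2w w).

Definition indep (a b : S1 + S2) : bool := side a != side b.

Inductive swap1 : seq (S1 + S2) -> seq (S1 + S2) -> Prop :=
| swap1_intro u a b v : indep a b -> swap1 (u ++ a :: b :: v) (u ++ b :: a :: v).

Inductive equivI : seq (S1 + S2) -> seq (S1 + S2) -> Prop :=
| eqI_refl w : equivI w w
| eqI_step u v w : swap1 u v -> equivI v w -> equivI u w.

End Shuffle.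

Section Orders.
Variable Sigma : finType.

Definition strict_total (r : rel Sigma) : Prop :=
  irreflexive r /\ transitive r /\ (forall a b, a != b -> r a b || r b a).

Definition contextual_order (prec : seq Sigma -> rel Sigma) : Prop :=
  forall u, strict_total (prec u).

Definition preceq (prec : seq Sigma -> rel Sigma) (s r : seq Sigma) : Prop :=
  prefix s r \/
  exists al a be b ga, s = al ++ a :: be /\ r = al ++ b :: ga /\ prec al a b.

Definition red (prec : seq Sigma -> rel Sigma) (equiv : seq Sigma -> seq Sigma -> Prop)
  (L : seq Sigma -> Prop) (w : seq Sigma) : Prop :=
  L w /\ forall u, L u -> equiv u w -> preceq prec u w -> u = w.

Definition vp_order (kind : Sigma -> vkind) (prec : seq Sigma -> rel Sigma) : Prop :=
  exists (A : DVPA Sigma) (ord : dQ A -> rel Sigma),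
    (forall q, strict_total (ord q)) /\ forall w, prec w = ord (@dstate Sigma kind A w).

End Orders.

Definition coherent (S1 S2 : finType) (k1 : S1 -> vkind) (k2 : S2 -> vkind)
  (prec : seq (S1 + S2) -> rel (S1 + S2)) : Prop :=
  forall u c rest, pending_calls (sumk k1 k2) u = c :: rest ->
    forall a r, side a = side c -> sumk k1 k2 r = VRet -> side r != side c ->
      prec u a r.

(* Main.v *)
Require Import Defs.
From mathcomp Require Import all_boot.
From Stdlib Require Import Setoid.
Set Implicit Arguments. Unset Strict Implicit. Unset Printing Implicit Defensive.

Section Trace.
Variables (S1 S2 : finType) (k1 : S1 -> vkind) (k2 : S2 -> vkind).
Local Notation Sig := (S1 + S2)%type.
Local Notation kind := (sumk k1 k2).
Local Notation proj1w := (@proj1w S1 S2).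
Local Notation proj2w := (@proj2w S1 S2).
Local Notation eqI := (@Defs.equivI S1 S2).


Definition pr (s : bool) (w : seq Sig) := filter (fun z => side z == s) w.

Lemma pr_true w : pr true w = map inl (proj1w w).
Proof. by elim: w => [|[a|a] w IH] //=; rewrite IH. Qed.
Lemma pr_false w : pr false w = map inr (proj2w w).
Proof. by elim: w => [|[a|a] w IH] //=; rewrite IH. Qed.

Lemma swap_proj u v : swap1 u v -> proj1w u = proj1w v /\ proj2w u = proj2w v.
Proof.
case=> x a b y; rewrite /indep /proj1w /proj2w !pmap_cat.
by case: a => a; case: b => b //= _.
Qed.

Lemma equiv_proj u v : eqI u v -> proj1w u = proj1w v /\ proj2w u = proj2w v.
Proof.
elim=> [//|x y z /swap_proj [-> ->] _ [-> ->]] //.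
Qed.

Lemma equiv_pr u v s : eqI u v -> pr s u = pr s v.
Proof. by case/equiv_proj=> H1 H2; case: s; rewrite ?pr_true ?pr_false ?H1 ?H2. Qed.

Lemma equiv_size (u v : seq Sig) : eqI u v -> size u = size v.
Proof.
elim=> [//|x y z [al a b be _] _ <-]; by rewrite !size_cat.
Qed.

Lemma equiv_shuffle (P1 : seq S1 -> Prop) (P2 : seq S2 -> Prop) u v :
  eqI u v -> shuffle P1 P2 v -> shuffle P1 P2 u.
Proof. by case/equiv_proj=> H1 H2; rewrite /shuffle H1 H2. Qed.

Lemma move_front al a x y : all (fun z => side z != side a) x ->
  eqI (al ++ a :: x ++ y) (al ++ x ++ a :: y).
Proof.
elim: x al => [|c x IH] al /=; first by move=> _; apply: eqI_refl.
case/andP=> Hc Hx.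
apply: (@eqI_step _ _ _ (al ++ c :: a :: x ++ y)).
  by apply: swap1_intro; rewrite /indep eq_sym.
by have := IH (rcons al c) Hx; rewrite -!cats1 -!catA.
Qed.

Lemma first_occ (p : pred Sig) v a t : filter p v = a :: t ->
  exists x y, v = x ++ a :: y /\ all (predC p) x /\ p a.
Proof.
elim: v => [//|b v IH] /=; case Hb: (p b).
  by case=> <- _; exists [::], v; rewrite Hb.
case/IH=> x [y [-> [Hx Ha]]]; exists (b :: x), y; by rewrite /= Hb.
Qed.

Variable prec : seq Sig -> rel Sig.
Hypothesis hctx : contextual_order prec.

Definition LF pre (w : seq Sig) := forall al b x a y, w = al ++ b :: x ++ a :: y ->
  all (fun z => side z == side b) x -> side a != side b -> ~~ prec (pre ++ al) a b.

Lemma red_LF (L : seq Sig -> Prop) (Lc : forall u v, eqI u v -> L v -> L u) w :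
  red prec eqI L w -> LF [::] w.
Proof.
case=> Lw Hmin al b x a y Hw Hx Hab; apply/negP=> Hp.
set u := al ++ a :: (b :: x) ++ y.
have Heq : eqI u w.
  rewrite /u Hw; apply: move_front => /=; rewrite eq_sym Hab /=.
  apply/allP=> z /(allP Hx) /eqP ->; by rewrite eq_sym.
have := Hmin u (Lc _ _ Heq Lw) Heq.
have Hpq : preceq prec u w.
  right; exists al, a, ((b :: x) ++ y), b, (x ++ a :: y); by rewrite Hw.
move=> /(_ Hpq); rewrite /u Hw => /eqP; rewrite eqseq_cat // => /andP [_ /eqP [E _]].
by move: Hab; rewrite E eqxx.
Qed.

Lemma LF_red (P1 : seq S1 -> Prop) (P2 : seq S2 -> Prop) w :
  shuffle P1 P2 w -> LF [::] w -> red prec eqI (shuffle P1 P2) w.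
Proof.
move=> Sw Hl; split=> // u _ Hequ [].
  case/prefixP=> t Ht; move: (equiv_size Hequ); rewrite Ht size_cat.
  move/eqP; rewrite -{1}[size u]addn0 eqn_add2l eq_sym size_eq0 => /eqP ->; by rewrite cats0.
case=> al [a [be [b [ga [Hu [Hw Hp]]]]]].
have Hpr s : pr s u = pr s w by apply: equiv_pr.
case: (hctx al) => Hirr _.
case Es: (side a == side b).
  have := Hpr (side a); rewrite Hu Hw /pr !filter_cat /= eqxx (eqP Es) eqxx.
  move/eqP; rewrite eqseq_cat // => /andP [_ /eqP [E _]].
  by move: Hp; rewrite E Hirr.
have := Hpr (side a); rewrite Hu Hw /pr !filter_cat /= eqxx eq_sym Es.
move/eqP; rewrite eqseq_cat // => /andP [_ /eqP E].
case: (first_occ (esym E)) => x [y [Hga [Hx _]]].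
have := Hl al b x a y; rewrite Hw Hga => /(_ erefl).
move=> H; exfalso; move: Hp; apply/negP; apply: H; last by rewrite Es.
apply/allP=> z /(allP Hx) /=; move: Es; by case: (side z); case: (side a); case: (side b).
Qed.

Lemma pend_cat st u v : pend_aux kind st (u ++ v) = pend_aux kind (pend_aux kind st u) v.
Proof. by elim: u st => [|a u IH] st //=; case: (kind a). Qed.

Lemma wn_cat st u v : wn_aux kind (@side S1 S2) st (u ++ v) =
  wn_aux kind (@side S1 S2) st u && wn_aux kind (@side S1 S2) (pend_aux kind st u) v.
Proof.
elim: u st => [|a u IH] st //=; case: (kind a) => //; case: st => [|c st] //=.
by rewrite IH andbA.
Qed.

Lemma wn_filter s st u : wn_aux kind (@side S1 S2) st u ->
  filter (fun c => side c == s) (pend_aux kind st u) =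
  pend_aux kind (filter (fun c => side c == s) st) (pr s u).
Proof.
elim: u st => [|a u IH] st //=; rewrite /pr /=.
case Ha: (side a == s); case Hk: (kind a) => //=; rewrite ?Hk.
- by move/IH => ->; rewrite /= Ha.
- case: st => [|c st] /=; first by move/IH.
  case/andP=> /eqP Hc /IH ->; by rewrite Hc Ha.
- by move/IH.
- by move/IH => ->; rewrite /= Ha.
- case: st => [|c st] /=; first by move/IH.
  case/andP=> /eqP Hc /IH ->; by rewrite Hc Ha.
- by move/IH.
Qed.

Lemma pend_map1 st x : pend_aux kind (map inl st) (map inl x) = map inl (pend_aux k1 st x).
Proof.
by elim: x st => [|a x IH] st //=; case: (k1 a) => //; rewrite -IH; case: st.
Qed.
Lemma pend_map2 st x : pend_aux kind (map inr st) (map inr x) = map inr (pend_aux k2 st x).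
Proof.
by elim: x st => [|a x IH] st //=; case: (k2 a) => //; rewrite -IH; case: st.
Qed.

Lemma pr_wm (P1 : seq S1 -> Prop) (P2 : seq S2 -> Prop)
  (wm1 : forall w, P1 w -> well_matched k1 w) (wm2 : forall w, P2 w -> well_matched k2 w)
  s w : shuffle P1 P2 w -> pend_aux kind [::] (pr s w) = [::].
Proof.
case=> H1 H2; case: s.
  rewrite pr_true -[[::]]/(map inl [::]) pend_map1.
  by case/andP: (wm1 _ H1) => /eqP; rewrite /pending_calls => ->.
rewrite pr_false -[[::]]/(map inr [::]) pend_map2.
by case/andP: (wm2 _ H2) => /eqP; rewrite /pending_calls => ->.
Qed.

Lemma red_wn (P1 : seq S1 -> Prop) (P2 : seq S2 -> Prop)
  (wm1 : forall w, P1 w -> well_matched k1 w) (wm2 : forall w, P2 w -> well_matched k2 w)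
  (hcoh : coherent k1 k2 prec) w :
  red prec eqI (shuffle P1 P2) w -> well_nested kind (@side S1 S2) w.
Proof.
move=> Hr; have HL := red_LF (@equiv_shuffle P1 P2) Hr.
have Sw : shuffle P1 P2 w by case: Hr.
suff H : forall v u, w = u ++ v -> wn_aux kind (@side S1 S2) [::] u ->
   wn_aux kind (@side S1 S2) (pend_aux kind [::] u) v.
  by apply: (H w [::]).
elim=> [//|a v IH] u Hw Hu.
suff H1 : wn_aux kind (@side S1 S2) (pend_aux kind [::] u) [:: a].
  rewrite -cat1s wn_cat H1 andTb -pend_cat; apply: IH; first by rewrite Hw -catA.
  by rewrite wn_cat Hu H1.
rewrite /=; case Hk: (kind a) => //.
case Hp: (pend_aux kind [::] u) => [//|c st]; rewrite andbT.
apply/negPn/negP=> Hs.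
set s := side c.
have Hf := wn_filter s Hu; rewrite Hp /= eqxx /= in Hf.
have := pr_wm wm1 wm2 s Sw; rewrite Hw /pr filter_cat pend_cat.
rewrite -/(pr s u) -Hf /=.
have -> : (side a == s) = false by apply/negbTE; rewrite eq_sym.
case Ev: (pr s v) => [|a' t]; first by rewrite /pr in Ev; rewrite Ev.
move=> _.
case: (first_occ Ev) => x [y [Hv [Hx Ha']]].
have := HL u a x a' y; rewrite Hw Hv => /(_ erefl).
have Hc : prec u a' a.
  apply: (hcoh u c st) => //; first by apply/eqP.
  by rewrite eq_sym.
rewrite /= Hc => H; apply: notF; apply: H.
  apply/allP=> z /(allP Hx) /=; move: Hs; rewrite /s.
  by case: (side z); case: (side a); case: (side c).
by move: Hs Ha'; rewrite /s; case: (side a); case: (side a'); case: (side c).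
Qed.

Definition lstep (o : rel Sig) (sd : bool) (F : {set Sig}) (a : Sig) : option (bool * {set Sig}) :=
  if side a == sd then Some (sd, F :|: [set x | o x a])
  else if a \in F then None else Some (side a, [set x | o x a]).

Fixpoint lchk (pre : seq Sig) (sd : bool) (F : {set Sig}) (w : seq Sig) : bool :=
  match w with
  | [::] => true
  | a :: w' => if lstep (prec pre) sd F a is Some (sd', F') then lchk (rcons pre a) sd' F' w'
               else false
  end.

Definition G (F : {set Sig}) (sd : bool) (w : seq Sig) := forall x a y, w = x ++ a :: y ->
  all (fun z => side z == sd) x -> side a != sd -> a \notin F.

Lemma G_nil F sd : G F sd [::].
Proof. by move=> [|? ?]. Qed.

Lemma G_same F sd a w : side a == sd -> G F sd (a :: w) <-> G F sd w.
Proof.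
move=> Ha; split=> H.
  move=> x b y Hw Hx Hb; apply: (H (a :: x) b y); by rewrite /= ?Hw ?Ha.
move=> [|c x] b y /=; first by case=> ? _; subst b; rewrite Ha.
case=> ? Hw; subst c=> /andP [_ Hx]; exact: H Hw Hx.
Qed.

Lemma G_diff F sd a w : side a != sd -> G F sd (a :: w) <-> a \notin F.
Proof.
move=> Ha; split=> H.
  exact: (H [::] a w).
move=> [|c x] b y /=; first by case=> ? _; subst b.
by case=> ? Hw; subst c=> /andP [Hc]; move: Ha; rewrite Hc.
Qed.

Lemma G_union F F' sd w : G (F :|: F') sd w <-> G F sd w /\ G F' sd w.
Proof.
split=> [H|[H H'] x a y Hw Hx Ha].
  by split=> x a y Hw Hx Ha; have := H x a y Hw Hx Ha; rewrite in_setU negb_or => /andP [].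
by rewrite in_setU negb_or (H x a y) ?(H' x a y).
Qed.

Lemma LF_nil pre : LF pre [::].
Proof. by move=> [|? ?]. Qed.

Lemma LF_cons pre a w : LF pre (a :: w) <->
  G [set x | prec pre x a] (side a) w /\ LF (rcons pre a) w.
Proof.
split=> [H|[H1 H2]].
  split.
    move=> x b y Hw Hx Hb; rewrite inE; have := H [::] a x b y; rewrite cats0 Hw.
    by apply.
  move=> al b x c y Hw Hx Hb; have := H (a :: al) b x c y; rewrite Hw cat_rcons.
  by apply.
move=> [|d al] b x c y /=.
  case=> ? Hw; subst b=> Hx Hb; rewrite cats0; have := H1 x c y Hw Hx Hb; by rewrite inE.
case=> ? Hw; subst d=> Hx Hb; have := H2 al b x c y Hw Hx Hb; by rewrite cat_rcons.
Qed.

Lemma lchk_iff pre sd F w : lchk pre sd F w <-> G F sd w /\ LF pre w.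
Proof.
elim: w pre sd F => [|a w IH] pre sd F /=.
  by split=> // _; split; [apply: G_nil | apply: LF_nil].
rewrite /lstep; case: ifP => Ha.
  rewrite IH LF_cons G_union G_same // (eqP Ha).
  by split=> [[[? ?] ?]|[? [? ?]]].
case: ifP => HF.
  split=> //; case; rewrite G_diff ?Ha // HF //.
rewrite IH LF_cons G_diff ?Ha // HF.
by split=> [[? ?]|[_ [? ?]]].
Qed.

End Trace.

Lemma vreach_nil_inv (Sigma : finType) (kind : Sigma -> vkind) (A : VPA Sigma) (q : vQ A) s q' s' :
  vreach kind q s [::] q' s' -> q' = q /\ s' = s.
Proof. by move=> H; inversion H. Qed.

Lemma vreach_cons_inv (Sigma : finType) (kind : Sigma -> vkind) (A : VPA Sigma) (q : vQ A) s a w q' s' :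
  vreach kind q s (a :: w) q' s' ->
  match kind a with
  | VCall => exists q1 g, vcall q a q1 g /\ vreach kind q1 (g :: s) w q' s'
  | VRet => match s with
            | g :: s0 => exists q1, vret q a (Some g) q1 /\ vreach kind q1 s0 w q' s'
            | [::] => exists q1, vret q a None q1 /\ vreach kind q1 [::] w q' s'
            end
  | VInt => exists q1, vint q a q1 /\ vreach kind q1 s w q' s'
  end.
Proof.
move=> H; inversion H; subst;
match goal with Hk : kind a = _ |- _ => rewrite Hk end; eauto.
Qed.

Section Build.
Variables (S1 S2 : finType) (k1 : S1 -> vkind) (k2 : S2 -> vkind).
Local Notation Sig := (S1 + S2)%type.
Local Notation kind := (sumk k1 k2).
Local Notation proj1w := (@proj1w S1 S2).
Local Notation proj2w := (@proj2w S1 S2).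
Variable prec : seq Sig -> rel Sig.
Variables (A1 : VPA S1) (A2 : VPA S2) (D : DVPA Sig) (ord : dQ D -> rel Sig).
Hypothesis hord : forall w, prec w = ord (dstate kind D w).

Definition CQ := (vQ A1 * vQ A2 * dQ D * bool * {set Sig})%type.
Definition CG := ((vGam A1 + vGam A2) * dGam D)%type.
Definition qa1 (q : CQ) := q.1.1.1.1.
Definition qa2 (q : CQ) := q.1.1.1.2.
Definition qd (q : CQ) := q.1.1.2.
Definition qs (q : CQ) := q.1.2.
Definition qF (q : CQ) := q.2.

Definition ccall (q : CQ) (a : Sig) (q' : CQ) (g : CG) : bool :=
  [&& lstep (ord (qd q)) (qs q) (qF q) a == Some (qs q', qF q'),
      dcall (qd q) a == (qd q', g.2) &
      match a, g.1 with
      | inl a1, inl g1 => vcall (qa1 q) a1 (qa1 q') g1 && (qa2 q' == qa2 q)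
      | inr a2, inr g2 => vcall (qa2 q) a2 (qa2 q') g2 && (qa1 q' == qa1 q)
      | _, _ => false
      end].

Definition cret (q : CQ) (a : Sig) (og : option CG) (q' : CQ) : bool :=
  [&& lstep (ord (qd q)) (qs q) (qF q) a == Some (qs q', qF q'),
      qd q' == dret (qd q) a (omap snd og) &
      match a, og with
      | inl a1, Some (inl g1, _) => vret (qa1 q) a1 (Some g1) (qa1 q') && (qa2 q' == qa2 q)
      | inl a1, None => vret (qa1 q) a1 None (qa1 q') && (qa2 q' == qa2 q)
      | inr a2, Some (inr g2, _) => vret (qa2 q) a2 (Some g2) (qa2 q') && (qa1 q' == qa1 q)
      | inr a2, None => vret (qa2 q) a2 None (qa2 q') && (qa1 q' == qa1 q)
      | _, _ => false
      end].

Definition cint (q : CQ) (a : Sig) (q' : CQ) : bool :=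
  [&& lstep (ord (qd q)) (qs q) (qF q) a == Some (qs q', qF q'),
      qd q' == dint (qd q) a &
      match a with
      | inl a1 => vint (qa1 q) a1 (qa1 q') && (qa2 q' == qa2 q)
      | inr a2 => vint (qa2 q) a2 (qa2 q') && (qa1 q' == qa1 q)
      end].

Definition cinit : {set CQ} := [set q : CQ | [&& qa1 q \in vinit A1, qa2 q \in vinit A2,
   qd q == dinit D, qs q & qF q == set0]].
Definition cfinal : {set CQ} := [set q : CQ | (qa1 q \in vfinal A1) && (qa2 q \in vfinal A2)].

Definition C : VPA Sig := {| vQ := CQ; vGam := CG; vinit := cinit; vfinal := cfinal;
  vcall := ccall; vret := cret; vint := cint |}.

Fixpoint drun2 (c : dQ D * seq (dGam D)) (w : seq Sig) : dQ D * seq (dGam D) :=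
  match w with
  | [::] => c
  | a :: w' =>
    match kind a with
    | VCall => drun2 ((dcall c.1 a).1, (dcall c.1 a).2 :: c.2) w'
    | VRet => match c.2 with
              | g :: s' => drun2 (dret c.1 a (Some g), s') w'
              | [::] => drun2 (dret c.1 a None, [::]) w'
              end
    | VInt => drun2 (dint c.1 a, c.2) w'
    end
  end.

Lemma drun_2 q s w : drun kind q s w = (drun2 (q, s) w).1.
Proof.
elim: w q s => [|a w IH] q s //=; case: (kind a) => //.
by case: (dcall q a) => q' g.
by case: s.
Qed.

Lemma drun2_cat c u v : drun2 c (u ++ v) = drun2 (drun2 c u) v.
Proof.
elim: u c => [|a u IH] [q s] //=; case: (kind a) => //; case: s => //.
Qed.

Lemma prec_ord pre d s : drun2 (dinit D, [::]) pre = (d, s) -> prec pre = ord d.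
Proof. by move=> H; rewrite hord /dstate drun_2 H. Qed.

Definition st1 (st : seq CG) := pmap (fun p => getl p.1) st.
Definition st2 (st : seq CG) := pmap (fun p => getr p.1) st.

Lemma drun2_step pre a d s : drun2 (dinit D, [::]) pre = (d, s) ->
  drun2 (dinit D, [::]) (rcons pre a) = drun2 (d, s) [:: a].
Proof. by move=> H; rewrite -cats1 drun2_cat H. Qed.

Lemma sound (q : vQ C) st w q' st' : vreach kind q st w q' st' ->
  [/\ vreach k1 (qa1 q) (st1 st) (proj1w w) (qa1 q') (st1 st'),
      vreach k2 (qa2 q) (st2 st) (proj2w w) (qa2 q') (st2 st') &
      forall pre, drun2 (dinit D, [::]) pre = (qd q, map snd st) ->
        lchk prec pre (qs q) (qF q) w].
Proof.
elim => {q st w q' st'}.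
- by move=> q s; split; [apply: vr_nil | apply: vr_nil | ].
- move=> q s a w q1 g q2 s2 Hk Hc _ [IH1 IH2 IH3].
  move: Hc; rewrite /= /ccall => /and3P [/eqP Hl /eqP Hd Hm].
  have H3 : forall pre, drun2 (dinit D, [::]) pre = (qd q, map snd s) ->
        lchk prec pre (qs q) (qF q) (a :: w).
    move=> pre Hpre /=; rewrite (prec_ord Hpre) Hl; apply: IH3.
    by rewrite (drun2_step _ Hpre) /= Hk Hd.
  case: a Hk Hl Hd Hm H3 => a1 Hk _ _; case: g IH1 IH2 IH3 => [[g1|g2] gd] //= IH1 IH2 _;
    case/andP => Hv /eqP E H3; split => //.
  + by exact: (vr_call (kind:=k1) Hk Hv IH1).
  + by rewrite -E.
  + by rewrite -E.
  + by exact: (vr_call (kind:=k2) Hk Hv IH2).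
- move=> q g s a w q1 q2 s2 Hk Hc _ [IH1 IH2 IH3].
  move: Hc; rewrite /= /cret => /and3P [/eqP Hl /eqP Hd Hm].
  have H3 : forall pre, drun2 (dinit D, [::]) pre = (qd q, map snd (g :: s)) ->
        lchk prec pre (qs q) (qF q) (a :: w).
    move=> pre Hpre /=; rewrite (prec_ord Hpre) Hl; apply: IH3.
    by rewrite (drun2_step _ Hpre) /= Hk Hd.
  case: a Hk Hl Hd Hm H3 => a1 Hk _ _; case: g IH1 IH2 IH3 => [[g1|g2] gd] //= IH1 IH2 _;
    case/andP => Hv /eqP E H3; split => //.
  + by exact: (vr_ret (kind:=k1) Hk Hv IH1).
  + by rewrite -E.
  + by rewrite -E.
  + by exact: (vr_ret (kind:=k2) Hk Hv IH2).
- move=> q a w q1 q2 s2 Hk Hc _ [IH1 IH2 IH3].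
  move: Hc; rewrite /= /cret => /and3P [/eqP Hl /eqP Hd Hm].
  have H3 : forall pre, drun2 (dinit D, [::]) pre = (qd q, [::]) ->
        lchk prec pre (qs q) (qF q) (a :: w).
    move=> pre Hpre /=; rewrite (prec_ord Hpre) Hl; apply: IH3.
    by rewrite (drun2_step _ Hpre) /= Hk Hd.
  case: a Hk Hl Hd Hm H3 => a1 Hk _ _ /= /andP [Hv /eqP E] H3; split => //.
  + by exact: (vr_ret_bot (kind:=k1) Hk Hv IH1).
  + by rewrite -E.
  + by rewrite -E.
  + by exact: (vr_ret_bot (kind:=k2) Hk Hv IH2).
- move=> q s a w q1 q2 s2 Hk Hc _ [IH1 IH2 IH3].
  move: Hc; rewrite /= /cint => /and3P [/eqP Hl /eqP Hd Hm].
  have H3 : forall pre, drun2 (dinit D, [::]) pre = (qd q, map snd s) ->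
        lchk prec pre (qs q) (qF q) (a :: w).
    move=> pre Hpre /=; rewrite (prec_ord Hpre) Hl; apply: IH3.
    by rewrite (drun2_step _ Hpre) /= Hk Hd.
  case: a Hk Hl Hd Hm H3 => a1 Hk _ _ /= /andP [Hv /eqP E] H3; split => //.
  + by exact: (vr_int (kind:=k1) Hk Hv IH1).
  + by rewrite -E.
  + by rewrite -E.
  + by exact: (vr_int (kind:=k2) Hk Hv IH2).
Qed.

Lemma complete w : forall (q : vQ C) st q1' s1' q2' s2' ls pre,
  vreach k1 (qa1 q) (st1 st) (proj1w w) q1' s1' ->
  vreach k2 (qa2 q) (st2 st) (proj2w w) q2' s2' ->
  map (fun p : CG => side p.1) st = map (@side S1 S2) ls ->
  drun2 (dinit D, [::]) pre = (qd q, map snd st) ->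
  wn_aux kind (@side S1 S2) ls w -> lchk prec pre (qs q) (qF q) w ->
  exists (q' : vQ C) st', [/\ vreach kind q st w q' st', qa1 q' = q1' & qa2 q' = q2'].
Proof.
elim: w => [|a w IH] q st q1' s1' q2' s2' ls pre H1 H2 Hs Hpre Hwn Hl.
  case: (vreach_nil_inv H1) => -> _; case: (vreach_nil_inv H2) => -> _.
  by exists q, st; split => //; apply: vr_nil.
move: Hl => /=; rewrite (prec_ord Hpre).
case Hls: (lstep (ord (qd q)) (qs q) (qF q) a) => [[sd1 F1]|] // Hl.
case: a Hls Hl Hwn H1 H2 Hpre => a1 Hls Hl Hwn H1 H2 Hpre.
- have := vreach_cons_inv H1; move: Hwn; rewrite /=; case Hk: (k1 a1) => Hwn.
  + case=> q0 [g [Hc Hr]].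
    pose q0' : vQ C := ((((q0, qa2 q), (dcall (qd q) (inl a1)).1), sd1), F1).
    have := IH q0' ((inl g, (dcall (qd q) (inl a1)).2) :: st) q1' s1' q2' s2' (inl a1 :: ls)
      (rcons pre (inl a1)) Hr H2.
    case=> //=; first by rewrite Hs.
      by rewrite (drun2_step _ Hpre) /= Hk.
    move=> q' [st' [Hr' E1 E2]]; exists q', st'; split => //.
    apply: (vr_call (kind:=kind) (A:=C) (a:=inl a1) (q1:=q0') (g := (inl g, (dcall (qd q) (inl a1)).2)) Hk _ Hr').
    by rewrite /= /ccall /= Hls -surjective_pairing !eqxx Hc.
  + case: ls Hs Hwn => [|c ls] Hs Hwn.
    * case: st Hs H1 H2 Hpre => // _ H1 H2 Hpre; case=> q0 [Hc Hr].
      pose q0' : vQ C := ((((q0, qa2 q), dret (qd q) (inl a1) None), sd1), F1).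
      have := IH q0' [::] q1' s1' q2' s2' [::] (rcons pre (inl a1)) Hr H2 erefl.
      case=> //=; first by rewrite (drun2_step _ Hpre) /= Hk.
      move=> q' [st' [Hr' E1 E2]]; exists q', st'; split => //.
      apply: (vr_ret_bot (kind:=kind) (A:=C) (a:=inl a1) (q1:=q0') Hk _ Hr').
      by rewrite /= /cret /= Hls !eqxx Hc.
    * case/andP: Hwn => Hsc Hwn.
      case: st Hs H1 H2 Hpre => // [[[g|g] gd] st] /= [Hsx Hs] H1 H2 Hpre; last first.
        by move: Hsc; rewrite -Hsx.
      case=> q0 [Hc Hr].
      pose q0' : vQ C := ((((q0, qa2 q), dret (qd q) (inl a1) (Some gd)), sd1), F1).
      have := IH q0' st q1' s1' q2' s2' ls (rcons pre (inl a1)) Hr H2 Hs.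
      case=> //=; first by rewrite (drun2_step _ Hpre) /= Hk.
      move=> q' [st' [Hr' E1 E2]]; exists q', st'; split => //.
      apply: (vr_ret (kind:=kind) (A:=C) (a:=inl a1) (g := (inl g, gd)) (q1:=q0') Hk _ Hr').
      by rewrite /= /cret /= Hls !eqxx Hc.
  + case=> q0 [Hc Hr].
    pose q0' : vQ C := ((((q0, qa2 q), dint (qd q) (inl a1)), sd1), F1).
    have := IH q0' st q1' s1' q2' s2' ls (rcons pre (inl a1)) Hr H2 Hs.
    case=> //=; first by rewrite (drun2_step _ Hpre) /= Hk.
    move=> q' [st' [Hr' E1 E2]]; exists q', st'; split => //.
    apply: (vr_int (kind:=kind) (A:=C) (a:=inl a1) (q1:=q0') Hk _ Hr').
    by rewrite /= /cint /= Hls !eqxx Hc.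
- have := vreach_cons_inv H2; move: Hwn; rewrite /=; case Hk: (k2 a1) => Hwn.
  + case=> q0 [g [Hc Hr]].
    pose q0' : vQ C := ((((qa1 q, q0), (dcall (qd q) (inr a1)).1), sd1), F1).
    have := IH q0' ((inr g, (dcall (qd q) (inr a1)).2) :: st) q1' s1' q2' s2' (inr a1 :: ls)
      (rcons pre (inr a1)) H1 Hr.
    case=> //=; first by rewrite Hs.
      by rewrite (drun2_step _ Hpre) /= Hk.
    move=> q' [st' [Hr' E1 E2]]; exists q', st'; split => //.
    apply: (vr_call (kind:=kind) (A:=C) (a:=inr a1) (q1:=q0') (g := (inr g, (dcall (qd q) (inr a1)).2)) Hk _ Hr').
    by rewrite /= /ccall /= Hls -surjective_pairing !eqxx Hc.
  + case: ls Hs Hwn => [|c ls] Hs Hwn.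
    * case: st Hs H1 H2 Hpre => // _ H1 H2 Hpre; case=> q0 [Hc Hr].
      pose q0' : vQ C := ((((qa1 q, q0), dret (qd q) (inr a1) None), sd1), F1).
      have := IH q0' [::] q1' s1' q2' s2' [::] (rcons pre (inr a1)) H1 Hr erefl.
      case=> //=; first by rewrite (drun2_step _ Hpre) /= Hk.
      move=> q' [st' [Hr' E1 E2]]; exists q', st'; split => //.
      apply: (vr_ret_bot (kind:=kind) (A:=C) (a:=inr a1) (q1:=q0') Hk _ Hr').
      by rewrite /= /cret /= Hls !eqxx Hc.
    * case/andP: Hwn => Hsc Hwn.
      case: st Hs H1 H2 Hpre => // [[[g|g] gd] st] /= [Hsx Hs] H1 H2 Hpre.
        by move: Hsc; rewrite -Hsx.
      case=> q0 [Hc Hr].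
      pose q0' : vQ C := ((((qa1 q, q0), dret (qd q) (inr a1) (Some gd)), sd1), F1).
      have := IH q0' st q1' s1' q2' s2' ls (rcons pre (inr a1)) H1 Hr Hs.
      case=> //=; first by rewrite (drun2_step _ Hpre) /= Hk.
      move=> q' [st' [Hr' E1 E2]]; exists q', st'; split => //.
      apply: (vr_ret (kind:=kind) (A:=C) (a:=inr a1) (g := (inr g, gd)) (q1:=q0') Hk _ Hr').
      by rewrite /= /cret /= Hls !eqxx Hc.
  + case=> q0 [Hc Hr].
    pose q0' : vQ C := ((((qa1 q, q0), dint (qd q) (inr a1)), sd1), F1).
    have := IH q0' st q1' s1' q2' s2' ls (rcons pre (inr a1)) H1 Hr Hs.
    case=> //=; first by rewrite (drun2_step _ Hpre) /= Hk.
    move=> q' [st' [Hr' E1 E2]]; exists q', st'; split => //.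
    apply: (vr_int (kind:=kind) (A:=C) (a:=inr a1) (q1:=q0') Hk _ Hr').
    by rewrite /= /cint /= Hls !eqxx Hc.
Qed.

End Build.

Theorem theorem3p18 (S1 S2 : finType) (k1 : S1 -> vkind) (k2 : S2 -> vkind)
  (P1 : seq S1 -> Prop) (P2 : seq S2 -> Prop)
  (hP1 : VPL k1 P1) (wm1 : forall w, P1 w -> well_matched k1 w)
  (hP2 : VPL k2 P2) (wm2 : forall w, P2 w -> well_matched k2 w)
  (prec : seq (S1 + S2) -> rel (S1 + S2))
  (hctx : contextual_order prec)
  (hvp : vp_order (sumk k1 k2) prec)
  (hcoh : coherent k1 k2 prec) :
  VPL (sumk k1 k2) (red prec (@equivI S1 S2) (shuffle P1 P2)) /\
  (forall w, red prec (@equivI S1 S2) (shuffle P1 P2) w ->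
     well_nested (sumk k1 k2) (@side S1 S2) w).
Proof.
case: hvp => D [ord [_ hord]].
case: hP1 => A1 HA1; case: hP2 => A2 HA2.
split; last by move=> w; apply: (red_wn wm1 wm2 hcoh).
exists (C A1 A2 ord) => w; split.
- move=> Hr.
  have Sw : shuffle P1 P2 w by case: Hr.
  have Hwn := red_wn wm1 wm2 hcoh Hr.
  have HL : LF prec [::] w by move=> al b x a y; apply: (red_LF (@equiv_shuffle _ _ P1 P2) Hr).
  have Hl : lchk prec [::] true set0 w.
    apply/(lchk_iff prec [::] true set0 w); split=> //.
    by move=> *; rewrite inE.
  case: Sw => H1 H2.
  case: ((HA1 _).1 H1) => i1 [f1 [s1 [Hi1 [R1 Hf1]]]].
  case: ((HA2 _).1 H2) => i2 [f2 [s2 [Hi2 [R2 Hf2]]]].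
  pose q0 : vQ (C A1 A2 ord) := ((((i1, i2), dinit D), true), set0).
  have := @complete _ _ k1 k2 prec A1 A2 D ord hord w q0 [::] f1 s1 f2 s2 [::] [::] R1 R2
     erefl erefl Hwn Hl.
  case=> q' [st' [Hr' E1 E2]].
  exists q0, q', st'; split => //.
    by rewrite inE /q0 /qa1 /qa2 /qd /qs /qF /= Hi1 Hi2 !eqxx.
  by rewrite inE -/(qa1 q') -/(qa2 q') E1 E2 Hf1 Hf2.
- case=> q0 [q [s [Hi [Hr Hf]]]].
  case: (sound (k1:=k1) (k2:=k2) hord Hr) => R1 R2 R3.
  move: Hi; rewrite inE => /and5P [i1 i2 /eqP d0 sd0 /eqP F0].
  move: Hf; rewrite inE => /andP [f1 f2].
  have Sw : shuffle P1 P2 w.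
    split; [apply/(HA1 _).2 | apply/(HA2 _).2]; do 3 eexists; split; eauto.
  apply: (LF_red hctx Sw).
  have := R3 [::]; rewrite d0 => /(_ erefl).
  by rewrite sd0 F0 => /(lchk_iff prec [::] true set0 w) [].
Qed.
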